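(* Let $0<\beta_1<\beta_2$. There is a unique $a=a(\beta_1,\beta_2)\in(0,1/\beta_1)$ satisfying $a\beta_1-1+(a\beta_2+1)e^{-a(\beta_1+\beta_2)}=0$. Moreover, for every $c\in(0,1)$, the limit $\lim a(\beta_1,\beta_2)\,\beta_1$, taken as $\beta_1/\beta_2\to c$ and $\beta_2\to0$, exists and lies in $(0,1)$. *)

(* Defs.v *)
From Stdlib Require Import Reals Lra.
Open Scope R_scope.

Definition root_eq (b1 b2 a : R) : Prop :=
  a * b1 - 1 + (a * b2 + 1) * exp (- (a * (b1 + b2))) = 0.

(* Main.v *)
Require Import Defs.
From Stdlib Require Import Reals Lra.
From Coquelicot Require Import Coquelicot.
Open Scope R_scope.

Definition H (r x : R) := (1+r)*x + ln (1-x) - ln (1+r*x).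
Definition F (r x : R) := x - 1 + (1 + r*x) * exp (-((1+r)*x)).

Lemma H_deriv r c : 1 < r -> 0 <= c < 1 ->
  derivable_pt_lim (H r) c ((1+r) - 1/(1-c) - r/(1+r*c)).
Proof.
  intros Hr Hc. apply is_derive_Reals. unfold H.
  auto_derive.
  - split; [lra|split;[|exact I]]. nra.
  - field. split; nra.
Qed.

Lemma H_deriv_eq r c : 1 < r -> 0 <= c < 1 ->
  (1+r) - 1/(1-c) - r/(1+r*c) = (1+r)*c*(r-1-r*c) / ((1-c)*(1+r*c)).
Proof. intros. field. split; nra. Qed.

Lemma H_incr r u v : 1 < r -> 0 <= u -> u < v -> v <= (r-1)/r -> H r u < H r v.
Proof.
  intros Hr Hu Huv Hv.
  assert (Hx1 : (r-1)/r < 1) by (apply Rmult_lt_reg_r with r; [lra|]; field_simplify; lra).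
  assert (Hx1' : r*((r-1)/r) = r-1) by (field; lra).
  destruct (MVT_cor2 (H r) (fun c => (1+r) - 1/(1-c) - r/(1+r*c)) u v Huv) as [c [Hc1 Hc2]].
  { intros c Hc. apply H_deriv; lra. }
  rewrite H_deriv_eq in Hc1 by lra.
  assert (0 < (1+r)*c*(r-1-r*c) / ((1-c)*(1+r*c))).
  { apply Rdiv_lt_0_compat.
    - apply Rmult_lt_0_compat; [apply Rmult_lt_0_compat; lra|].
      assert (r*c < r*((r-1)/r)) by (apply Rmult_lt_compat_l; lra). lra.
    - apply Rmult_lt_0_compat; nra. }
  nra.
Qed.

Lemma H_decr r u v : 1 < r -> (r-1)/r <= u -> u < v -> v < 1 -> H r v < H r u.
Proof.
  intros Hr Hu Huv Hv.
  assert (Hx0 : 0 < (r-1)/r) by (apply Rdiv_lt_0_compat; lra).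
  assert (Hx1' : r*((r-1)/r) = r-1) by (field; lra).
  destruct (MVT_cor2 (H r) (fun c => (1+r) - 1/(1-c) - r/(1+r*c)) u v Huv) as [c [Hc1 Hc2]].
  { intros c Hc. apply H_deriv; lra. }
  rewrite H_deriv_eq in Hc1 by lra.
  assert ((1+r)*c*(r-1-r*c) / ((1-c)*(1+r*c)) < 0).
  { unfold Rdiv. apply Rmult_neg_pos.
    - assert (r*((r-1)/r) < r*c) by (apply Rmult_lt_compat_l; lra).
      assert (0 < (1+r)*c) by (apply Rmult_lt_0_compat; lra). nra.
    - apply Rinv_0_lt_compat. apply Rmult_lt_0_compat; nra. }
  nra.
Qed.

Lemma H0 r : H r 0 = 0.
Proof. unfold H. rewrite Rmult_0_r, Rmult_0_r, Rminus_0_r, Rplus_0_r, ln_1. ring. Qed.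

Lemma F_H r x : 1 < r -> 0 <= x < 1 -> F r x = (1-x)*(exp (- H r x) - 1).
Proof.
  intros Hr Hx. unfold F, H.
  replace (- ((1 + r) * x + ln (1 - x) - ln (1 + r * x)))
    with (- ((1+r)*x) + (- ln (1-x)) + ln (1 + r*x)) by ring.
  rewrite !exp_plus, !exp_Ropp. rewrite (exp_ln (1-x)) by lra. rewrite (exp_ln (1+r*x)) by nra.
  pose proof (exp_pos ((1+r)*x)). field. split; lra.
Qed.

Lemma F_neg r x : 1 < r -> 0 <= x < 1 -> 0 < H r x -> F r x < 0.
Proof.
  intros Hr Hx Hh. rewrite F_H by lra.
  assert (exp (- H r x) < 1) by (rewrite <- exp_0; apply exp_increasing; lra).
  nra.
Qed.

Lemma F_zero_H r x : 1 < r -> 0 <= x < 1 -> F r x = 0 -> H r x = 0.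
Proof.
  intros Hr Hx HF. rewrite F_H in HF by lra.
  assert (exp (- H r x) = exp 0).
  { rewrite exp_0. destruct (Rmult_integral _ _ HF); lra. }
  apply exp_inv in H1. lra.
Qed.

Lemma H_pos r x : 1 < r -> 0 < x <= (r-1)/r -> 0 < H r x.
Proof. intros. rewrite <- (H0 r). apply H_incr; lra. Qed.

Lemma root_gt r x : 1 < r -> 0 < x < 1 -> H r x = 0 -> (r-1)/r < x.
Proof.
  intros Hr Hx Hh. destruct (Rlt_le_dec ((r-1)/r) x) as [|Hle]; auto.
  pose proof (H_pos r x Hr (conj (proj1 Hx) Hle)). lra.
Qed.

Lemma F_cont r : continuity (F r).
Proof.
  intros x. apply continuity_pt_filterlim. apply (ex_derive_continuous (F r)).
  unfold F. auto_derive. exact I.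
Qed.

Lemma core_ex r : 1 < r -> exists x, 0 < x < 1 /\ F r x = 0.
Proof.
  intros Hr.
  assert (Hx0 : 0 < (r-1)/r) by (apply Rdiv_lt_0_compat; lra).
  assert (Hx1 : (r-1)/r < 1) by (apply Rmult_lt_reg_r with r; [lra|]; field_simplify; lra).
  destruct (IVT (F r) ((r-1)/r) 1 (F_cont r) Hx1) as [z [Hz1 Hz2]].
  - apply F_neg; try lra. apply H_pos; lra.
  - unfold F. replace (1 - 1 + (1 + r * 1) * exp (- ((1 + r) * 1))) with ((1+r) * exp (- ((1 + r) * 1))) by ring.
    apply Rmult_lt_0_compat; [lra| apply exp_pos].
  - exists z. split; [|auto]. split; [lra|].
    destruct Hz1 as [_ [Hlt|Heq]]; auto. subst z.
    unfold F in Hz2. replace (1 - 1 + (1 + r * 1) * exp (- ((1 + r) * 1))) with ((1+r) * exp (- ((1 + r) * 1))) in Hz2 by ring.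
    pose proof (exp_pos (- ((1 + r) * 1))). nra.
Qed.

Lemma core_uniq r x y : 1 < r -> 0 < x < 1 -> 0 < y < 1 -> F r x = 0 -> F r y = 0 -> x = y.
Proof.
  intros Hr Hx Hy Fx Fy.
  apply F_zero_H in Fx; try lra. apply F_zero_H in Fy; try lra.
  pose proof (root_gt r x Hr Hx Fx). pose proof (root_gt r y Hr Hy Fy).
  destruct (Rtotal_order x y) as [Hl|[He|Hg]]; auto.
  - pose proof (H_decr r x y Hr ltac:(lra) Hl ltac:(lra)). lra.
  - pose proof (H_decr r y x Hr ltac:(lra) Hg ltac:(lra)). lra.
Qed.
Lemma ln_le_sub1 u : 0 < u -> ln u <= u - 1.
Proof.
  intros Hu. set (y := ln u). assert (u = exp y) by (unfold y; rewrite exp_ln; auto).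
  destruct (Req_dec y 0) as [E|E].
  - rewrite H1, E, exp_0. lra.
  - pose proof (exp_ineq1 y E). lra.
Qed.

Lemma H_lip r s x : 1 < s -> s <= r -> 0 < x < 1 -> 0 <= H r x - H s x <= r - s.
Proof.
  intros Hs Hrs Hx.
  assert (Hd : H r x - H s x = (r-s)*x - (ln (1+r*x) - ln (1+s*x))) by (unfold H; ring).
  rewrite Hd.
  assert (D0 : 0 <= ln (1+r*x) - ln (1+s*x)).
  { assert (ln (1+s*x) <= ln (1+r*x)) by (apply ln_le; nra). lra. }
  assert (D1 : ln (1+r*x) - ln (1+s*x) <= (r-s)*x).
  { rewrite <- ln_div by nra.
    pose proof (ln_le_sub1 ((1+r*x)/(1+s*x)) ltac:(apply Rdiv_lt_0_compat; nra)).
    assert ((1+r*x)/(1+s*x) - 1 <= (r-s)*x).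
    { replace ((1+r*x)/(1+s*x) - 1) with ((r-s)*x/(1+s*x)) by (field; nra).
      apply Rmult_le_reg_r with (1+s*x); [nra|].
      unfold Rdiv. rewrite Rmult_assoc, Rinv_l by nra. nra. }
    lra. }
  split; nra.
Qed.

Lemma H_close r s x : 1 < r -> 1 < s -> 0 < x < 1 -> Rabs (H r x - H s x) <= Rabs (r - s).
Proof.
  intros Hr Hs Hx. destruct (Rle_dec s r).
  - pose proof (H_lip r s x Hs r0 Hx). rewrite !Rabs_right by lra. lra.
  - pose proof (H_lip s r x Hr ltac:(lra) Hx). rewrite !Rabs_left1 by lra. lra.
Qed.

Lemma root_eq_F b1 b2 a : 0 < b1 -> root_eq b1 b2 a <-> F (b2/b1) (a*b1) = 0.
Proof.
  intros Hb. unfold root_eq, F.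
  replace (1 + b2/b1*(a*b1)) with (a*b2+1) by (field; lra).
  replace ((1+b2/b1)*(a*b1)) with (a*(b1+b2)) by (field; lra).
  tauto.
Qed.

Theorem lemma3p1 :
  (forall b1 b2 : R, 0 < b1 -> b1 < b2 ->
     exists! a : R, (0 < a /\ a < 1 / b1) /\ root_eq b1 b2 a) /\
  (forall c : R, 0 < c -> c < 1 ->
     exists L : R, 0 < L /\ L < 1 /\
       forall eps : R, 0 < eps ->
         exists delta : R, 0 < delta /\
           forall b1 b2 a : R, 0 < b1 -> b1 < b2 ->
             Rabs (b1 / b2 - c) < delta -> b2 < delta ->
             0 < a -> a < 1 / b1 -> root_eq b1 b2 a ->
             Rabs (a * b1 - L) < eps).
Proof.
  split.
  - intros b1 b2 Hb1 Hb12.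
    assert (Hr : 1 < b2/b1) by (apply Rmult_lt_reg_r with b1; [lra|]; field_simplify; lra).
    destruct (core_ex _ Hr) as [x [Hx Fx]].
    exists (x/b1). split.
    + split.
      * split. apply Rdiv_lt_0_compat; lra.
        unfold Rdiv. apply Rmult_lt_compat_r; [apply Rinv_0_lt_compat|]; lra.
      * apply root_eq_F; auto. replace (x/b1*b1) with x by (field; lra). auto.
    + intros a' [[Ha1 Ha2] Ha3]. apply root_eq_F in Ha3; auto.
      assert (0 < a'*b1 < 1).
      { split. nra. apply Rmult_lt_compat_r with (r:=b1) in Ha2; auto.
        replace (1/b1*b1) with 1 in Ha2 by (field; lra). lra. }
      pose proof (core_uniq _ _ _ Hr Hx H1 Fx Ha3).
      rewrite H2. field. lra.
  - intros c Hc0 Hc1.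
    set (r0 := 1/c).
    assert (Hr0 : 1 < r0) by (unfold r0; apply Rmult_lt_reg_r with c; [lra|]; field_simplify; lra).
    destruct (core_ex _ Hr0) as [L [HL FL]].
    exists L. split; [lra|split;[lra|]].
    intros eps Heps.
    apply F_zero_H in FL; try lra.
    set (m := (r0-1)/r0).
    assert (Hm : m < L) by (apply root_gt; auto).
    assert (Hm0 : 0 < m) by (unfold m; apply Rdiv_lt_0_compat; lra).
    set (e' := Rmin (eps/2) (Rmin ((L-m)/2) ((1-L)/2))).
    assert (He1 : e' <= eps/2) by apply Rmin_l.
    assert (He2 : e' <= (L-m)/2) by (eapply Rle_trans; [apply Rmin_r|apply Rmin_l]).
    assert (He3 : e' <= (1-L)/2) by (eapply Rle_trans; [apply Rmin_r|apply Rmin_r]).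
    assert (He0 : 0 < e') by (unfold e'; repeat apply Rmin_pos; lra).
    set (p := L - e'). set (q := L + e').
    assert (Hp : 0 < H r0 p) by (pose proof (H_decr r0 p L Hr0 ltac:(unfold p, q, m in *; lra) ltac:(unfold p; lra) ltac:(lra)); lra).
    assert (Hq : H r0 q < 0) by (pose proof (H_decr r0 L q Hr0 ltac:(unfold p, q, m in *; lra) ltac:(unfold q; lra) ltac:(unfold q; lra)); lra).
    assert (Hm' : m = 1 - 1/r0) by (unfold m; field; lra).
    assert (Hpr : r0 < 1/(1-p)).
    { apply Rmult_lt_reg_r with (1-p); [unfold p; lra|].
      replace (1/(1-p)*(1-p)) with 1 by (field; unfold p; lra).
      assert (1 - p < 1/r0) by (unfold p; lra).
      apply Rmult_lt_compat_l with (r:=r0) in H1; [|lra].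
      replace (r0*(1/r0)) with 1 in H1 by (field; lra). lra. }
    set (dr := Rmin (Rmin (H r0 p) (- H r0 q)) (1/(1-p) - r0)).
    assert (Hdr1 : dr <= H r0 p) by (eapply Rle_trans; [apply Rmin_l|apply Rmin_l]).
    assert (Hdr2 : dr <= - H r0 q) by (eapply Rle_trans; [apply Rmin_l|apply Rmin_r]).
    assert (Hdr3 : dr <= 1/(1-p) - r0) by apply Rmin_r.
    assert (Hdr0 : 0 < dr) by (unfold dr; repeat apply Rmin_pos; lra).
    exists (Rmin (c/2) (dr*(c*c)/2)). split.
    { apply Rmin_pos. lra. apply Rdiv_lt_0_compat; [|lra]. apply Rmult_lt_0_compat; nra. }
    intros b1 b2 a Hb1 Hb12 Ht _ Ha1 Ha2 Hroot.
    assert (Hd1 : Rmin (c/2) (dr*(c*c)/2) <= c/2) by apply Rmin_l.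
    assert (Hd2 : Rmin (c/2) (dr*(c*c)/2) <= dr*(c*c)/2) by apply Rmin_r.
    set (t := b1/b2) in *. set (r := b2/b1).
    assert (Hrt : r * t = 1) by (unfold r, t; field; lra).
    assert (Hr1 : 1 < r) by (unfold r; apply Rmult_lt_reg_r with b1; [lra|]; field_simplify; lra).
    assert (Hr0c : r0 * c = 1) by (unfold r0; field; lra).
    apply Rabs_def2 in Ht. destruct Ht as [Ht1 Ht2].
    assert (Htpos : c/2 < t) by lra.
    assert (Hkey : (r - r0) * (t * c) = c - t) by (transitivity (r*t*c - r0*c*t); [ring| rewrite Hrt, Hr0c; ring]).
    assert (Htc : c*c/2 < t*c) by nra.
    assert (Hrr : Rabs (r - r0) < dr).
    { apply Rabs_def1.
      - destruct (Rlt_le_dec (r - r0) dr); auto.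
        assert (dr * (t*c) <= (r - r0)*(t*c)) by (apply Rmult_le_compat_r; nra). nra.
      - destruct (Rlt_le_dec (-dr) (r - r0)); auto.
        assert ((r - r0)*(t*c) <= -dr * (t*c)) by (apply Rmult_le_compat_r; nra). nra. }
    apply root_eq_F in Hroot; auto. fold r in Hroot.
    set (x := a*b1) in *.
    assert (Hx : 0 < x < 1).
    { split. unfold x; nra. apply Rmult_lt_compat_r with (r:=b1) in Ha2; auto.
      replace (1/b1*b1) with 1 in Ha2 by (field; lra). unfold x; lra. }
    apply F_zero_H in Hroot; try lra.
    assert (Hxm : (r-1)/r < x) by (apply root_gt; auto).
    assert (Hrr' : Rabs (r - r0) < 1/(1-p) - r0) by lra.
    assert (Hrp : r < 1/(1-p)) by (apply Rabs_def2 in Hrr'; lra).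
    assert (Hmr : (r-1)/r < p).
    { replace ((r-1)/r) with (1 - 1/r) by (field; lra).
      assert (1 - p < 1/r).
      { apply Rmult_lt_reg_r with r; [lra|]. replace (1/r*r) with 1 by (field; lra).
        apply Rmult_lt_compat_l with (r:=1-p) in Hrp; [|unfold p; lra].
        replace ((1-p)*(1/(1-p))) with 1 in Hrp by (field; unfold p; lra). lra. }
      lra. }
    assert (Hrp' : 0 < H r p).
    { pose proof (H_close r r0 p Hr1 Hr0 ltac:(unfold p; lra)).
      assert (Rabs (H r p - H r0 p) < dr) by lra. apply Rabs_def2 in H2. lra. }
    assert (Hrq' : H r q < 0).
    { pose proof (H_close r r0 q Hr1 Hr0 ltac:(unfold q; lra)).
      assert (Rabs (H r q - H r0 q) < dr) by lra. apply Rabs_def2 in H2. lra. }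
    assert (Hpx : p < x).
    { destruct (Rlt_le_dec p x) as [|Hle]; auto. destruct Hle as [Hlt|Heq].
      - pose proof (H_decr r x p Hr1 ltac:(lra) Hlt ltac:(unfold p; lra)). lra.
      - rewrite <- Heq in Hrp'. lra. }
    assert (Hxq : x < q).
    { destruct (Rlt_le_dec x q) as [|Hle]; auto. destruct Hle as [Hlt|Heq].
      - pose proof (H_decr r q x Hr1 ltac:(unfold p, q in *; lra) Hlt ltac:(lra)). lra.
      - rewrite Heq in Hrq'. lra. }
    apply Rabs_def1; unfold p, q in *; lra.
Qed.
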